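(* Let $\underline{t}$ and $\underline{u}$ be increment arrays of the same size $s$ for $n$ agents with $\underline{t}\approx\underline{u}$. Then \[\bigcup_{i=1}^{n}\{C(i,\underline{t})\}=\bigcup_{i=1}^{n}\{C(i,\underline{u})\},\] i.e.\ the set of coalitions generated by $\underline{t}$ from all starting agents equals the set generated by $\underline{u}$ from all starting agents.
   Context: Agent identifiers are $\{1,\ldots,n\}$, arithmetic on identifiers is modulo $n$ with representatives in $\{1,\ldots,n\}$ (a value $0$ is replaced by $n$). An increment array (IA) of size $s$ ($1\le s\le n$) for $n$ agents is a tuple $\underline{t}=\langle t_0,\ldots,t_{s-1}\rangle$ of non-negative integers with $\sum t_i=n-s$. Cumulative increments: $\varphi_1=0$, $\varphi_i=\sum_{k=0}^{i-2}(t_k+1)$ for $2\le i\le s+1$. The coalition generated from $x$ is $C(x,\underline{t})=\{x\}\cup\bigcup_{i=2}^{s}\{(x+\varphi_i)\bmod n\}$ (residues in $\{1,\ldots,n\}$). Two IAs of the same size are equivalent, $\underline{t}\approx\underline{u}$, if $\underline{u}$ is a circular shift of $\underline{t}$: there is $0\le k\le s-1$ with $\langle u_0,\ldots,u_{s-1}\rangle=\langle t_k,\ldots,t_{s-1},t_0,\ldots,t_{k-1}\rangle$. *)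

(* Defs.v *)
From mathcomp Require Import all_boot.
Set Implicit Arguments. Unset Strict Implicit. Unset Printing Implicit Defensive.

Definition rep (n x : nat) : nat := if x %% n == 0 then n else x %% n.

Definition is_IA (n s : nat) (t : seq nat) : Prop :=
  [/\ 1 <= s <= n, size t = s & sumn t = n - s].

Definition phi (t : seq nat) (i : nat) : nat :=
  \sum_(0 <= k < i.-1) (nth 0 t k).+1.

Definition coalition (n : nat) (t : seq nat) (x : nat) : seq nat :=
  x :: [seq rep n (x + phi t i) | i <- iota 2 (size t).-1].

Definition ia_equiv (t u : seq nat) : Prop :=
  size t = size u /\ exists2 k, k <= (size t).-1 & u = rot k t.

(* Main.v *)
Require Import Defs.
From mathcomp Require Import all_boot.
From mathcomp Require Import zify.

Definition S (t : seq nat) (m : nat) : nat := \sum_(0 <= k < m) (nth 0 t k).+1.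

Lemma S0 t : S t 0 = 0.
Proof. by rewrite /S big_geq. Qed.

Lemma SS t m : S t m.+1 = S t m + (nth 0 t m).+1.
Proof. by rewrite /S big_nat_recr. Qed.

Lemma S_size t : S t (size t) = sumn t + size t.
Proof.
elim: t => [|a t IH]; first by rewrite S0.
rewrite /S /= big_nat_recl //.
change (a.+1 + S t (size t) = a + sumn t + (size t).+1).
rewrite IH; lia.
Qed.

Lemma Stt_lo t p : p <= size t -> S (t ++ t) p = S t p.
Proof.
move=> hp; apply: eq_big_nat => i /andP[_ hi].
by rewrite nth_cat (leq_trans hi hp).
Qed.

Lemma Stt_hi t p : p <= size t -> S (t ++ t) (size t + p) = S t (size t) + S t p.
Proof.
elim: p => [|p IH] hp; first by rewrite addn0 S0 addn0 Stt_lo.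
rewrite addnS !SS IH ?(ltnW hp) // nth_cat ltnNge leq_addr /= addKn; lia.
Qed.

Lemma S_rot t k m : k < size t -> m <= size t ->
  S (rot k t) m + S t k = S (t ++ t) (k + m).
Proof.
move=> hk; elim: m => [|m IH] hm.
  by rewrite S0 addn0 Stt_lo // ltnW.
have e : drop k (t ++ t) = rot k t ++ drop k t.
  by rewrite drop_cat hk /rot -catA cat_take_drop.
have hn : nth 0 (rot k t) m = nth 0 (t ++ t) (k + m).
  by rewrite -nth_drop e nth_cat size_rot hm.
rewrite addnS !SS -hn -IH ?(ltnW hm) //; lia.
Qed.

Lemma rep_mod n a : rep n a %% n = a %% n.
Proof. rewrite /rep; case: eqP => [->|_]; [by rewrite modnn | by rewrite modn_mod]. Qed.

Lemma rep_range n a : 0 < n -> 0 < rep n a <= n.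
Proof.
move=> hn; rewrite /rep; case: eqP => [_|h]; first by rewrite hn leqnn.
have := ltn_pmod a hn; rewrite lt0n; move/eqP: h; lia.
Qed.

Lemma rep_uniq n z w : 0 < z <= n -> 0 < w <= n -> z %% n = w %% n -> z = w.
Proof.
move=> /andP[z0 zn] /andP[w0 wn].
case: (ltngtP z n) zn => // [zl|ze] _; case: (ltngtP w n) wn => // [wl|we] _.
- by rewrite !modn_small.
- by rewrite we modnn modn_small // => h; move: z0; rewrite h.
- by rewrite ze modnn modn_small // => h; move: w0; rewrite -h.
- by rewrite ze we.
Qed.

Arguments rep_uniq {n z w}.
Lemma rep_eq n a z : 0 < z <= n -> z %% n = a %% n -> rep n a = z.
Proof.
move=> hz h; have n0 : 0 < n by case/andP: hz => /leq_trans; apply.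
apply: rep_uniq; [exact: rep_range | exact: hz | by rewrite rep_mod].
Qed.

Arguments rep_eq {n a z}.
Arguments Stt_lo {t p}.
Lemma mem_coal n t x z : 0 < n -> 0 < x <= n -> 0 < size t ->
  (z \in coalition n t x) <->
  (0 < z <= n /\ exists2 m, m < size t & z %% n = (x + S t m) %% n).
Proof.
move=> n0 hx st; rewrite /coalition in_cons; split.
- case/orP => [/eqP ->|/mapP [i hi ->]].
    by split => //; exists 0 => //; rewrite S0 addn0.
  split; first exact: rep_range.
  move: hi; rewrite mem_iota => /andP[h1 h2].
  exists i.-1; first lia.
  by rewrite rep_mod.
- case=> hz [m hm e]; case: m hm e => [|m] hm e.
    by rewrite S0 addn0 in e; rewrite (rep_uniq hz hx e) eqxx.
  apply/orP; right; apply/mapP; exists m.+2.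
    rewrite mem_iota; lia.
  by rewrite (rep_eq hz e).
Qed.

Arguments mem_coal {n t x z}.
Arguments rep_range {n a}.
Lemma repD n a b : (rep n a + b) %% n = (a + b) %% n.
Proof. by rewrite -modnDml rep_mod modnDml. Qed.

Lemma modDr_eq n x a b : a %% n = b %% n -> (x + a) %% n = (x + b) %% n.
Proof. by move=> h; rewrite -modnDmr h modnDmr. Qed.

Lemma fwd t k m : k < size t -> m < size t ->
  exists2 m', m' < size t &
    (S (rot k t) m + S t k) %% S t (size t) = S t m' %% S t (size t).
Proof.
move=> hk hm; rewrite S_rot //; last exact: ltnW.
case: (ltnP (k + m) (size t)) => h.
  by exists (k + m) => //; rewrite (Stt_lo (ltnW h)).
exists (k + m - size t); first lia.
rewrite {1}(_ : k + m = size t + (k + m - size t)); last lia.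
rewrite Stt_hi ?modnDl //; lia.
Qed.

Lemma bwd t k m' : k < size t -> m' < size t ->
  exists2 m, m < size t &
    (S (rot k t) m + S t k) %% S t (size t) = S t m' %% S t (size t).
Proof.
move=> hk hm.
case: (leqP k m') => h.
  exists (m' - k); first lia.
  rewrite S_rot ?subnKC //; last lia. by rewrite Stt_lo //; apply: ltnW.
exists (m' + size t - k); first lia.
rewrite S_rot; last lia; last done.
have -> : k + (m' + size t - k) = size t + m' by lia.
rewrite Stt_hi ?modnDl //; exact: ltnW.
Qed.

Lemma main_eq n t k x : 0 < size t -> S t (size t) = n -> k < size t ->
  0 < x <= n ->
  coalition n t x =i coalition n (rot k t) (rep n (x + S t k)).
Proof.
move=> st hn hk hx.
have n0 : 0 < n by case/andP: hx => /leq_trans; apply.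
have su : 0 < size (rot k t) by rewrite size_rot.
have hy := @rep_range n (x + S t k) n0.
move=> z; apply/idP/idP.
- move/(mem_coal n0 hx st) => [hz [m' hm' e]].
  apply/(mem_coal n0 hy su); split => //.
  have [m hm e2] := bwd _ _ _ hk hm'.
  exists m; first by rewrite size_rot.
  rewrite repD e -addnA; apply: modDr_eq; rewrite addnC -hn e2 //.
- move/(mem_coal n0 hy su) => [hz [m hm e]].
  apply/(mem_coal n0 hx st); split => //.
  rewrite size_rot in hm.
  have [m' hm' e2] := fwd _ _ _ hk hm.
  exists m' => //.
  rewrite e repD -addnA; apply: modDr_eq; rewrite addnC -hn e2 //.
Qed.

Theorem lemma3 (n s : nat) (t u : seq nat) :
  is_IA n s t -> is_IA n s u -> ia_equiv t u ->
  (forall i, 1 <= i <= n -> exists2 j, 1 <= j <= n &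
     coalition n t i =i coalition n u j) /\
  (forall j, 1 <= j <= n -> exists2 i, 1 <= i <= n &
     coalition n u j =i coalition n t i).
Proof.
move=> [/andP[s1 sn] st sumt] _ [_ [k hk ->]].
have st0 : 0 < size t by rewrite st.
have hk' : k < size t by lia.
have hn : S t (size t) = n by rewrite S_size; lia.
have n0 : 0 < n by lia.
split.
- move=> i hi; exists (rep n (i + S t k)); first exact: rep_range n0.
  exact: main_eq.
- move=> j hj.
  have Skn : S t k <= n.
    rewrite -hn /S [X in _ <= X](@big_cat_nat _ _ _ k) //=; last exact: ltnW.
    exact: leq_addr.
  exists (rep n (j + (n - S t k))); first exact: rep_range n0.
  set x := rep n (j + (n - S t k)).
  have ej : rep n (x + S t k) = j.
    apply/rep_eq => //; rewrite repD -addnA subnK // modnDr //.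
  rewrite -{1}ej => z; rewrite -main_eq //; exact: rep_range n0.
Qed.
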